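(* There is a universal constant $C$ such that for all positive integers $k,n$ and all distinct integers $g_0,g_1$, there is a $k$-party, one-round, deterministic protocol for the Sum-Distinguish problem over $\mathbb{Z}$ with $n$-bit inputs relative to $g_0,g_1$ with total communication complexity at most $k\log k+C\cdot k$.
   Context: Model: parties $P_1,\dots,P_k$ each hold an integer input $x_i\in\{0,\dots,2^n-1\}$; a coordinator (distinct from the parties) wants to compute $f(x_1,\dots,x_k)$. In a deterministic one-round protocol each party sends a single message, a function of its own input only, to the coordinator, who outputs a value depending only on the received messages; there is no other communication. Total communication complexity is the maximum over inputs of the total number of bits sent. Sum-Distinguish over $\mathbb{Z}$ relative to distinct integers $g_0,g_1$: the partial function $f=1$ if $\sum_i x_i=g_1$ and $f=0$ if $\sum_i x_i=g_0$ (undefined otherwise); the protocol must output the correct value on every input where $f$ is defined. $\log$ is base 2. *)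

(* Defs.v *)
From Stdlib Require Import Reals.
From mathcomp Require Import all_boot all_order all_algebra.

Set Implicit Arguments.
Unset Strict Implicit.
Unset Printing Implicit Defensive.

(* A deterministic one-round k-party protocol with a coordinator:
   party i sends the bit string [msg i x_i] (depending only on its own input),
   and the coordinator outputs [out m] from the tuple of received messages. *)
Record protocol (k : nat) := Protocol {
  msg : 'I_k -> nat -> seq bool;
  out : ('I_k -> seq bool) -> bool
}.

Definition valid_input (k n : nat) (x : 'I_k -> nat) : Prop :=
  forall i : 'I_k, x i < 2 ^ n.

Definition run (k : nat) (P : protocol k) (x : 'I_k -> nat) : bool :=
  out P (fun i => msg P i (x i)).

Definition input_sum (k : nat) (x : 'I_k -> nat) : int :=
  (\sum_(i < k) Posz (x i))%R.

Definition solves_sum_distinguish (k n : nat) (g0 g1 : int) (P : protocol k)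
  : Prop :=
  forall x : 'I_k -> nat, valid_input n x ->
    (input_sum x = g1 -> run P x = true) /\
    (input_sum x = g0 -> run P x = false).

Definition bits_sent (k : nat) (P : protocol k) (x : 'I_k -> nat) : nat :=
  \sum_(i < k) size (msg P i (x i)).

Definition total_cc_le (k n : nat) (P : protocol k) (B : R) : Prop :=
  forall x : 'I_k -> nat, valid_input n x -> Rle (INR (bits_sent P x)) B.

Definition log2 (t : R) : R := Rdiv (ln t) (ln 2).

(* Main.v *)
Require Import Defs.
From Stdlib Require Import Reals Lra.
From mathcomp Require Import all_boot all_order all_algebra zify.
Fixpoint enc (l w : nat) : seq bool :=
  match l with 0 => [::] | l'.+1 => odd w :: enc l' w./2 end.
Fixpoint dec (s : seq bool) : nat :=
  match s with [::] => 0 | b :: s' => (b : nat) + (dec s').*2 end.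

Lemma size_enc l w : size (enc l w) = l.
Proof. by elim: l w => //= l IH w; rewrite IH. Qed.

Lemma dec_enc l w : w < 2 ^ l -> dec (enc l w) = w.
Proof.
elim: l w => [|l IH] w /=; first by case: w.
move=> hw; rewrite IH ?odd_double_half //.
rewrite expnS in hw; have := odd_double_half w; lia.
Qed.

Lemma ln_le' x y : Rlt 0 x -> Rle x y -> Rle (ln x) (ln y).
Proof. move=> h0 [h|->]; [left; exact: ln_increasing | right; reflexivity]. Qed.

Lemma INR_expn2 b : INR (2 ^ b) = pow 2 b.
Proof.
elim: b => [|b IH] //=; rewrite expnS mult_INR IH //.
Qed.

Local Open Scope R_scope.
Lemma real_bound (k b : nat) : (0 < k)%N -> (b = 0 \/ 2 ^ b < k)%N ->
  Rle (INR b.+1) (Rplus (log2 (INR k)) 2).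
Proof.
move=> k0 hb.
have l2 : Rlt 0 (ln 2) by rewrite -ln_1; apply: ln_increasing; lra.
have hk : Rle 1 (INR k) by apply: (le_INR 1); apply/leP.
rewrite S_INR.
case: hb => [->|hb].
  have : Rle 0 (log2 (INR k)).
    rewrite /log2; apply: Rmult_le_pos; last by apply: Rlt_le; apply: Rinv_0_lt_compat.
    rewrite -ln_1; apply: ln_le'; lra.
  simpl; lra.
have h1 : Rle (INR (2 ^ b)) (INR k) by apply: le_INR; apply/leP; apply: ltnW.
rewrite INR_expn2 in h1.
have h2 : Rle (INR b * ln 2) (ln (INR k)).
  rewrite -ln_pow; last lra. apply: ln_le' => //. apply: pow_lt; lra.
have : Rle (INR b) (log2 (INR k)).
  rewrite /log2 /Rdiv.
  replace (INR b) with ((INR b * ln 2) * / ln 2) by (field; lra).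
  apply: Rmult_le_compat_r => //; apply: Rlt_le; apply: Rinv_0_lt_compat; lra.
lra.
Qed.
Local Close Scope R_scope.

Lemma R_id x y : Rmult x (Rplus y 3) = Rplus (Rmult x y) (Rmult 3 x).
Proof. ring. Qed.

From mathcomp Require Import ring.
Import GRing.Theory Num.Theory Order.TTheory.
Local Open Scope ring_scope.

Lemma key (k h q : nat) (g0 g1 j : int) (x : 'I_k -> nat) :
  (0 < q)%N -> (k * (q - 1) < h)%N -> g1 - g0 = j * (h*2)%N%:Z + h%:Z ->
  let W := (\sum_(i < k) ((x i %% (h*2)) %/ q))%N in
  (input_sum x = g1 -> ((g1 - (q * W)%N%:Z) %% (h*2)%N%:Z)%Z <= (k*(q-1))%N%:Z) /\
  (input_sum x = g0 -> ~~ (((g1 - (q * W)%N%:Z) %% (h*2)%N%:Z)%Z <= (k*(q-1))%N%:Z)).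
Proof.
move=> q0 hk hd W.
set m := (h*2)%N.
set A := (\sum_(i < k) (x i %/ m))%N.
set s := (\sum_(i < k) ((x i %% m) %% q))%N.
have hs : (s <= k * (q - 1))%N.
  rewrite /s; apply: leq_trans (_ : \sum_(i < k) (q - 1) <= _)%N.
    apply: leq_sum => i _; have := ltn_pmod (x i %% m)%N q0; lia.
  by rewrite sum_nat_const card_ord.
have hx : (\sum_(i < k) x i = m * A + q * W + s)%N.
  rewrite /A /W /s !big_distrr -!big_split /=; apply: eq_bigr => i _.
  rewrite {1}(divn_eq (x i) m) {1}(divn_eq (x i %% m)%N q).
  move: (x i %/ m)%N ((x i %% m) %/ q)%N ((x i %% m) %% q)%N => a b c; lia.
have hS : input_sum x = (m * A + q * W + s)%N%:Z.
  by rewrite -hx /input_sum (big_morph Posz PoszD (erefl _)).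
split => hE.
  have -> : g1 - (q * W)%N%:Z = A%:Z * m%:Z + s%:Z.
    rewrite -hE hS !PoszD !PoszM; ring.
  rewrite modzMDl modz_small; first by rewrite lez_nat.
  apply/andP; split => //; rewrite ltz_nat; lia.
have -> : g1 - (q * W)%N%:Z = (j + A%:Z) * m%:Z + (h + s)%N%:Z.
  have -> : g1 = g0 + (j * m%:Z + h%:Z) by rewrite -hd; ring.
  rewrite -hE hS !PoszD !PoszM; ring.
rewrite modzMDl modz_small; first by rewrite lez_nat -ltnNge; lia.
apply/andP; split => //; rewrite ltz_nat; lia.
Qed.

Local Close Scope ring_scope.
Local Open Scope R_scope.
Lemma real_bound2 (k : nat) : (0 < k)%N ->
  Rle (INR (up_log 2 k).+1) (Rplus (log2 (INR k)) 3).
Proof.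
move=> k0.
case: (ltngtP k 1) => hk; first by lia.
  have hb : (0 < up_log 2 k)%N by rewrite up_log_gt0.
  have := @real_bound k (up_log 2 k).-1 k0 (or_intror (up_log_gtn (isT : (1 < 2)%N) hk)).
  rewrite prednK // (S_INR (up_log 2 k)); lra.
subst k; rewrite up_log1; have := @real_bound 1 0 k0 (or_introl erefl); simpl; lra.
Qed.
Definition C3 : R := 3.
Local Close Scope R_scope.

Import GRing.Theory Num.Theory Order.TTheory.
Local Open Scope ring_scope.

Theorem mainTheorem10 :
  exists C : R,
    forall (k n : nat) (g0 g1 : int),
      (0 < k)%N -> (0 < n)%N -> g0 <> g1 ->
      exists P : protocol k,
        solves_sum_distinguish n g0 g1 P /\
        total_cc_le n P (Rplus (Rmult (INR k) (log2 (INR k))) (Rmult C (INR k))).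
Proof.
exists C3 => k n g0 g1 k0 n0 hg.
set d := (g1 - g0)%R.
have d0 : (0 < `|d|)%N.
  rewrite lt0n absz_eq0 /d subr_eq0; apply/eqP => e; apply: hg; exact/esym.
have [o o_odd hd] := pfactor_coprime (isT : prime 2) d0.
rewrite coprime2n in o_odd.
set t := logn 2 `|d| in hd.
set h := (2 ^ t)%N.
set b := up_log 2 k.
set q := (2 ^ (t - b))%N.
set m := (h * 2)%N.
have q0 : (0 < q)%N by rewrite expn_gt0.
have hkb : (k <= 2 ^ b)%N by apply: up_logP.
have hkq : (k * (q - 1) < h)%N.
  case: (leqP b t) => hbt.
    have e : (2 ^ b * q = h)%N by rewrite -expnD subnKC.
    have h0 : (0 < 2 ^ b)%N by rewrite expn_gt0.
    nia.
  have -> : q = 1%N by rewrite /q (eqP (_ : t - b == 0)%N) // subn_eq0 ltnW.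
  by rewrite subnn muln0 expn_gt0.
have ho : (o * h = o./2 * m + h)%N.
  rewrite -{1}(odd_double_half o) o_odd /m -muln2; nia.
have [j hj] : exists j : int, (g1 - g0 = j * m%:Z + h%:Z)%R.
  case: (ger0P d) => sd.
    exists (o./2)%:Z; rewrite -/d -(gez0_abs sd) hd ho.
    by rewrite PoszD PoszM.
  exists (- (o./2)%:Z - 1)%R.
  have -> : (g1 - g0 = - (- d))%R by rewrite opprK.
  rewrite -(ltz0_abs sd) hd ho PoszD PoszM /m PoszM; ring.
have hdec : forall y, ((y %% m) %/ q < 2 ^ b.+1)%N.
  move=> y; rewrite ltn_divLR // -expnD.
  apply: (leq_trans (ltn_pmod y _)); first by rewrite /m muln_gt0 expn_gt0.
  rewrite /m /h -expnSr leq_exp2l //; lia.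
pose P := Protocol (fun (i : 'I_k) (y : nat) => enc b.+1 ((y %% m) %/ q)%N)
  (fun f => (((g1 - (q * \sum_(i < k) dec (f i))%N%:Z) %% m%:Z)%Z <= (k * (q - 1))%N%:Z)%R).
exists P; split.
  move=> x vx.
  have -> : run P x = (((g1 - (q * \sum_(i < k) ((x i %% m) %/ q))%N%:Z) %% m%:Z)%Z <= (k * (q - 1))%N%:Z)%R.
    rewrite /run /= (eq_bigr (fun i => (x i %% m) %/ q)%N) // => i _.
    by have /= := dec_enc _ _ (hdec (x i)).
  have [H1 H2] := @key k h q g0 g1 j x q0 hkq hj.
  split => e; first exact: H1.
  by apply/negbTE; apply: H2.
move=> x _.
have -> : bits_sent P x = (k * b.+1)%N.
  rewrite /bits_sent /=.
  rewrite (eq_bigr (fun _ => b.+1)); last by move=> i _; rewrite size_enc.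
  by rewrite sum_nat_const card_ord.
rewrite mult_INR.
have := @real_bound2 k k0; rewrite -/b => hr.
have hk : Rle 0 (INR k) by apply: pos_INR.
have := Rmult_le_compat_l _ _ _ hk hr.
move=> H; apply: (Rle_trans _ _ _ H); right; rewrite /C3; apply: R_id.
Qed.
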